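(* Let $\Gamma$ be a $k$-regular graph on $n$ vertices and let $g$ be an automorphism of $\Gamma$ with no fixed vertices. Then the number of $1$-factors (perfect matchings) of $\Gamma$ that are mapped onto themselves by $g$ is at most $(8\mathrm{e}k)^{n/4}$.
   Context: A $1$-factor of a graph is a set of edges such that every vertex lies in exactly one of them. A $1$-factor $F$ is fixed by $g$ if $g(F)=F$ as a set of edges. Here $\mathrm{e}$ is Euler's number. *)

(* Defs.v *)
From HB Require Import structures.
From mathcomp Require Import all_boot all_order all_algebra all_fingroup.
From mathcomp Require Import all_classical all_reals all_analysis.
Set Implicit Arguments. Unset Strict Implicit. Unset Printing Implicit Defensive.

Definition simple_graph (T : finType) (e : rel T) : Prop :=
  symmetric e /\ irreflexive e.

Definition regular (T : finType) (e : rel T) (k : nat) : Prop :=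
  forall x : T, #|[set y | e x y]| = k.

Definition is_automorphism (T : finType) (e : rel T) (g : {perm T}) : Prop :=
  forall x y : T, e (g x) (g y) = e x y.

(* Edges are represented as 2-element vertex sets {x,y} with x ~ y. *)
Definition is_edge (T : finType) (e : rel T) (E : {set T}) : bool :=
  [exists x, exists y, (E == [set x; y]) && e x y].

Definition one_factor (T : finType) (e : rel T) (F : {set {set T}}) : bool :=
  [forall E in F, is_edge e E] &&
  [forall v, #|[set E in F | v \in E]| == 1%N].

Definition perm_edges (T : finType) (g : {perm T}) (F : {set {set T}})
  : {set {set T}} := [set [set g v | v in E] | E : {set T} in F].

Definition num_fixed_one_factors (T : finType) (e : rel T) (g : {perm T}) : nat :=
  #|[set F : {set {set T}} | one_factor e F && (perm_edges g F == F)]|.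

(* Main.v *)
Require Import Defs.
From HB Require Import structures.
From mathcomp Require Import all_boot all_order all_algebra all_fingroup.
From mathcomp Require Import all_classical all_reals all_analysis.
From mathcomp Require Import zify.
Import Order.TTheory GRing.Theory Num.Theory.
Set Implicit Arguments. Unset Strict Implicit. Unset Printing Implicit Defensive.


Section Orb.
Variables (T : finType) (g : {perm T}).

Lemma iterg_perm i x : iter i g x = (g ^+ i)%g x.
Proof. by rewrite permX. Qed.

Lemma porbit_iter x y : y \in porbit g x -> exists i, y = iter i g x.
Proof. by move/porbitP=> [i ->]; exists i; rewrite permX. Qed.

Lemma iter_in_porbit i x : iter i g x \in porbit g x.
Proof. by rewrite -permX mem_porbit. Qed.

Definition rep x := odflt x [pick y in porbit g x].

Lemma rep_in x : rep x \in porbit g x.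
Proof.
rewrite /rep; case: pickP => [y -> //|/(_ x)]; by rewrite porbit_id.
Qed.

Lemma rep_same x y : y \in porbit g x -> rep y = rep x.
Proof.
move=> H; have E : porbit g y = porbit g x by apply/eqP; rewrite eq_porbit_mem.
by rewrite /rep E; case: pickP => // /(_ y); rewrite -E porbit_id.
Qed.

Lemma rep_iter i x : rep (iter i g x) = rep x.
Proof. by apply: rep_same; apply: iter_in_porbit. Qed.

Lemma rep_rep x : rep (rep x) = rep x.
Proof. by apply: rep_same; apply: rep_in. Qed.

Lemma in_porbit_rep x : x \in porbit g (rep x).
Proof. by rewrite porbit_sym rep_in. Qed.

Lemma same_rep_porbit x y : rep x = rep y -> x \in porbit g y.
Proof.
move=> E; have h1 := in_porbit_rep x; have h2 := in_porbit_rep y.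
rewrite E -eq_porbit_mem in h1; rewrite -eq_porbit_mem in h2.
by rewrite -eq_porbit_mem (eqP h1) -(eqP h2).
Qed.

Lemma iter_mod x n : iter n g x = iter (n %% #|porbit g x|) g x.
Proof.
set d := #|porbit g x|.
rewrite {1}(divn_eq n d) addnC iterD; congr (iter _ g _).
elim: (n %/ d) => [//|q IH]; by rewrite mulSn iterD IH iter_porbit.
Qed.

Lemma iter_inj_lt x i j : i < #|porbit g x| -> j < #|porbit g x| ->
  iter i g x = iter j g x -> i = j.
Proof.
move=> hi hj E; have U := uniq_traject_porbit g x.
apply/eqP; rewrite -(nth_uniq x _ _ U) ?size_traject //.
by rewrite !nth_traject // E.
Qed.

Lemma half_cycle x a b :
  iter (a + a) g x = x -> iter a g x != x ->
  iter (b + b) g x = x -> iter b g x != x -> iter a g x = iter b g x.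
Proof.
set d := #|porbit g x|.
have d0 : 0 < d by rewrite lt0n card_porbit_neq0.
have key : forall a, iter (a + a) g x = x -> iter a g x != x ->
    (a %% d) + (a %% d) = d.
  move=> c h1 h2.
  have hc : 0 < c %% d.
    rewrite lt0n; apply: contra h2 => /eqP h0.
    by rewrite iter_mod -/d h0.
  have hlt : c %% d < d by rewrite ltn_mod.
  have : (c + c) %% d = 0.
    apply: (@iter_inj_lt x); rewrite -/d ?ltn_mod //.
    by rewrite -iter_mod h1.
  rewrite -modnDm => /eqP; rewrite -/(dvdn _ _) => /dvdnP [q hq].
  case: q hq => [|[|q]] hq; first by lia.
    by lia.
  by nia.
move=> ha1 ha2 hb1 hb2.
rewrite (iter_mod x a) (iter_mod x b) -/d; congr (iter _ g x).
have := key a ha1 ha2; have := key b hb1 hb2; lia.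
Qed.


Definition sig (p : T -> T) x := rep (p x).
Definition Lset (p : T -> T) :=
  [set r | (rep r == r) && (enum_rank r < enum_rank (sig p r))%N].

Definition goodp (p : T -> T) :=
  [/\ forall x, p (p x) = x, forall x, p x != x & forall x, p (g x) = g (p x)].

Lemma p_iter p : goodp p -> forall i x, p (iter i g x) = iter i g (p x).
Proof. by case=> _ _ H; elim=> [//|i IH] x; rewrite !iterS H IH. Qed.

Lemma sig_rep p : goodp p -> forall x, sig p (rep x) = sig p x.
Proof.
move=> gp x; have [i Hi] := porbit_iter (rep_in x).
by rewrite /sig Hi p_iter // rep_iter.
Qed.

Lemma sig_sig p : goodp p -> forall x, sig p (sig p x) = rep x.
Proof.
move=> gp x; rewrite [sig p x]/sig sig_rep // /sig; by case: gp => -> _ _.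
Qed.

Lemma cross p1 p2 : goodp p1 -> goodp p2 -> Lset p1 = Lset p2 ->
  {in Lset p1, p1 =1 p2} ->
  forall r, rep r = r -> r \notin Lset p1 -> sig p1 r != r -> p1 r = p2 r.
Proof.
move=> g1 g2 EL Ag r hr rL hs.
set s := sig p1 r.
have ss : sig p1 s = r by rewrite /s sig_sig // hr.
have rs : rep s = s by rewrite /s /sig rep_rep.
have sL : s \in Lset p1.
  rewrite inE rs eqxx /= ss.
  move: rL; rewrite inE hr eqxx /= -leqNgt leq_eqVlt => /orP[|//].
  move/eqP=> /ord_inj /enum_rank_inj E.
  by rewrite E eqxx in hs.
have E2 := Ag s sL.
have Hr : r \in porbit g (p1 s).
  by rewrite -ss /sig rep_in.
have [i Hi] := porbit_iter Hr.
have Hr2 : r = iter i g (p2 s) by rewrite -E2.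
rewrite {1}Hi (p_iter g1) {1}Hr2 (p_iter g2).
by case: g1 => -> _ _; case: g2 => -> _ _.
Qed.

Lemma p_determined p1 p2 : goodp p1 -> goodp p2 -> Lset p1 = Lset p2 ->
  {in Lset p1, p1 =1 p2} -> p1 =1 p2.
Proof.
move=> g1 g2 EL Ag.
have Ag' : {in Lset p2, p2 =1 p1} by move=> x; rewrite -EL => /Ag ->.
suff onrep : forall r, rep r = r -> p1 r = p2 r.
  move=> x; have [i ->] := porbit_iter (in_porbit_rep x).
  by rewrite !p_iter // onrep // rep_rep.
move=> r hr.
case rL : (r \in Lset p1); first exact: Ag.
have rL2 : r \notin Lset p2 by rewrite -EL rL.
case: (eqVneq (sig p1 r) r) => h1; last by apply: cross; rewrite ?rL.
case: (eqVneq (sig p2 r) r) => h2; last by symmetry; apply: cross.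
have ho1 : p1 r \in porbit g r by rewrite -{2}h1 /sig in_porbit_rep.
have ho2 : p2 r \in porbit g r by rewrite -{2}h2 /sig in_porbit_rep.
have [a Ha] := porbit_iter ho1; have [b Hb] := porbit_iter ho2.
rewrite Ha Hb; apply: half_cycle.
- by rewrite iterD -Ha -(p_iter g1) -Ha; case: g1 => ->.
- by rewrite -Ha; case: g1.
- by rewrite iterD -Hb -(p_iter g2) -Hb; case: g2 => ->.
- by rewrite -Hb; case: g2.
Qed.

Lemma Lset_sub p : Lset p \subset [set r | rep r == r].
Proof. by apply/fintype.subsetP=> x; rewrite !inE => /andP[]. Qed.

Lemma Lset_half p : goodp p ->
  (#|Lset p| + #|Lset p| <= #|[set r | rep r == r]|)%N.
Proof.
move=> gp; set R := [set r | rep r == r].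
rewrite -(cardsID (Lset p) R).
have -> : R :&: Lset p = Lset p by apply/finset.setIidPr; exact: Lset_sub.
rewrite leq_add2l.
have <- : #|sig p @: Lset p| = #|Lset p|.
  apply: card_in_imset => x y; rewrite !inE => /andP[/eqP hx _] /andP[/eqP hy _] E.
  by rewrite -hx -hy -(sig_sig gp x) -(sig_sig gp y) E.
apply: subset_leq_card; apply/fintype.subsetP=> _ /imsetP[x xL ->].
move: xL; rewrite !inE => /andP[/eqP hx hlt].
have rr : rep (sig p x) = sig p x by rewrite /sig rep_rep.
by rewrite rr eqxx /= andbT sig_sig // hx -leqNgt ltnW.
Qed.

Lemma reps_half : (forall x, g x != x) ->
  (#|[set r | rep r == r]| + #|[set r | rep r == r]| <= #|T|)%N.
Proof.
move=> nf; set R := [set r | rep r == r].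
rewrite -{2}(card_imset R (@perm_inj _ g)).
suff D : [disjoint R & g @: R].
  have /eqP <- : #|R :|: g @: R| == (#|R| + #|g @: R|)%N.
    by rewrite (finset.leq_card_setU R (g @: R)).2.
  exact: max_card.
rewrite finset.disjoints_subset; apply/fintype.subsetP=> x xR; rewrite inE.
apply/imsetP=> [[y yR E]].
move: xR yR; rewrite !inE E => /eqP hx /eqP hy.
have : rep (iter 1 g y) = rep y := rep_iter 1 y.
by rewrite /= hx hy => E2; move: (nf y); rewrite E2 eqxx.
Qed.

End Orb.

Section OF.
Variables (T : finType) (e : rel T).
Hypothesis sg : simple_graph e.

Definition partner (F : {set {set T}}) v := odflt v [pick y | [set v; y] \in F].

Lemma edge_e v w : is_edge e [set v; w] -> e v w.
Proof.
case: sg => sym irr.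
move=> /existsP[x /existsP[y /andP[/eqP E exy]]].
have vin : v \in [set x; y] by rewrite -E set21.
have win : w \in [set x; y] by rewrite -E set22.
have xin : x \in [set v; w] by rewrite E set21.
have yin : y \in [set v; w] by rewrite E set22.
have xy : x != y by apply: contraTneq exy => ->; rewrite irr.
move: vin win xin yin; rewrite !inE.
case/orP=> /eqP hv; subst v.
- case/orP=> /eqP hw; subst w; last by [].
  by move=> _ /orP[] /eqP hy; move: xy; rewrite hy eqxx.
- case/orP=> /eqP hw; subst w; first by rewrite sym.
  by move=> /orP[] /eqP hx; move: xy; rewrite hx eqxx.
Qed.

Variable F : {set {set T}}.
Hypothesis oF : one_factor e F.

Lemma of_uniq E1 E2 v : E1 \in F -> E2 \in F -> v \in E1 -> v \in E2 -> E1 = E2.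
Proof.
case/andP: oF => _ /forallP /(_ v) /cards1P [E0 H] h1 h2 v1 v2.
have : E1 \in [set E in F | v \in E] by rewrite inE h1 v1.
have : E2 \in [set E in F | v \in E] by rewrite inE h2 v2.
by rewrite H !inE => /eqP -> /eqP ->.
Qed.

Lemma of_edge E : E \in F -> is_edge e E.
Proof. by case/andP: oF => /forallP H _ h; have := H E; rewrite h. Qed.

Lemma partner_in v : [set v; partner F v] \in F.
Proof.
rewrite /partner; case: pickP => [y -> //|none].
case/andP: oF => _ /forallP /(_ v) /cards1P [E0 H].
have : E0 \in [set E in F | v \in E] by rewrite H set11.
rewrite inE => /andP[E0F vE0].
have /existsP[x /existsP[y /andP[/eqP E exy]]] := of_edge E0F.
move: vE0; rewrite E !inE => /orP[] /eqP hv; subst v.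
- by move: (none y); rewrite -E E0F.
- by move: (none x); rewrite finset.setUC -E E0F.
Qed.

Lemma partner_e v : e v (partner F v).
Proof. exact: edge_e (of_edge (partner_in v)). Qed.

Lemma partner_neq v : partner F v != v.
Proof. case: sg => _ irr; apply: contraTneq (partner_e v) => ->; by rewrite irr. Qed.

Lemma partner_uniq v w : [set v; w] \in F -> w = partner F v.
Proof.
move=> h.
have E := of_uniq h (partner_in v) (set21 v w) (set21 v _).
have : w \in [set v; partner F v] by rewrite -E set22.
rewrite !inE => /orP[/eqP hw|/eqP //]; subst w.
by case: sg => _ irr; move: (edge_e (of_edge h)); rewrite irr.
Qed.

Lemma partner_inv v : partner F (partner F v) = v.
Proof. by apply/esym/partner_uniq; rewrite finset.setUC partner_in. Qed.

Lemma F_eq : F = [set [set x; partner F x] | x : T].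
Proof.
apply/setP=> E; apply/idP/imsetP=> [h|[x _ ->]]; last exact: partner_in.
have /existsP[x /existsP[y /andP[/eqP HE _]]] := of_edge h.
exists x => //; apply: (@of_uniq _ _ x h (partner_in x)); by rewrite ?HE set21.
Qed.

Lemma partner_g (g : {perm T}) : perm_edges g F = F ->
  forall v, partner F (g v) = g (partner F v).
Proof.
move=> hfix v; apply/esym/partner_uniq.
rewrite -{2}hfix /perm_edges.
have -> : [set g v; g (partner F v)] = [set g x | x in [set v; partner F v]].
  by rewrite imsetU1 imset_set1.
by apply: imset_f; exact: partner_in.
Qed.

End OF.

Lemma card_Fam (T : finType) (e : rel T) k (L : {set T}) : regular e k ->
  #|[set q : {ffun T -> T} | q \in family (fun x => if x \in L then [set y | e x y] else [set x])]| = k ^ #|L|.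
Proof.
move=> reg.
rewrite cardsE card_family /image_mem.
have -> : forall s : seq T, foldr muln 1 [seq #|(fun x => if x \in L then [set y | e x y] else [set x]) x| | x <- s]
   = \prod_(x <- s) (if x \in L then k else 1).
  elim=> [|x s IH]; first by rewrite big_nil.
  by rewrite big_cons /= IH; case: (x \in L); rewrite ?reg ?cards1.
by rewrite -big_mkcond big_enum_cond /= prod_nat_const.
Qed.

Lemma natpart (N m n k : nat) : N <= 2 ^ m * (maxn k 1) ^ m./2 -> m + m <= n ->
  (n = 0 \/ 0 < k) -> N ^ 4 <= (4 * k) ^ n.
Proof.
move=> HN Hm [n0|k0].
  have m0 : m = 0 by lia.
  subst; move: HN; rewrite /= expn0 muln1 expn0.
  by case: N => [|[|]].
have E : maxn k 1 = k by apply/maxn_idPl.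
rewrite E in HN.
apply: (@leq_trans ((2 ^ m * k ^ m./2) ^ 4)); first by rewrite leq_exp2r.
apply: (@leq_trans ((4 * k) ^ (m + m))); last by rewrite leq_pexp2l // muln_gt0.
rewrite expnMn -!expnM expnMn.
have -> : 2 ^ (m * 4) = 4 ^ (m + m) by rewrite -(@expnM 2 2) ; congr (2 ^ _); lia.
rewrite leq_mul2l leq_pexp2l //; first by rewrite orbT.
have := odd_double_half m; case: (odd m) => /=; lia.
Qed.


Lemma card_bigcup_le (I U : finType) (A : {set I}) (B : I -> {set U}) :
  (#|\bigcup_(i in A) B i| <= \sum_(i in A) #|B i|)%N.
Proof.
elim/big_rec2: _ => [|i S n _ IH]; first by rewrite cards0.
by rewrite (leq_trans (leq_card_setU _ _).1) // leq_add2l.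
Qed.

Section Count.
Variables (T : finType) (e : rel T) (k : nat) (g : {perm T}).
Hypothesis sg : simple_graph e.
Hypothesis reg : regular e k.

Definition Fixs := [set F : {set {set T}} | one_factor e F && (perm_edges g F == F)].
Definition Rs := [set r | rep g r == r].
Definition enc (F : {set {set T}}) :=
  (Lset g (partner F),
   [ffun x => if x \in Lset g (partner F) then partner F x else x]).
Definition Famf (L : {set T}) :=
  [set q : {ffun T -> T} | q \in family (fun x => if x \in L then [set y | e x y] else [set x])].
Definition Sset := \bigcup_(L in [set L in powerset Rs | (#|L| + #|L| <= #|Rs|)%N])
   [set (L, q) | q in Famf L].

Lemma goodF F : F \in Fixs -> goodp g (partner F).
Proof.
rewrite inE => /andP[oF /eqP hf]; rewrite /goodp; split.
- exact: (partner_inv sg oF).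
- exact: (partner_neq sg oF).
- exact: (partner_g sg oF hf).
Qed.

Lemma enc_inj : {in Fixs &, injective enc}.
Proof.
move=> F1 F2 h1 h2 [] EL Eq.
have g1 := goodF h1; have g2 := goodF h2.
have Hp : partner F1 =1 partner F2.
  apply: (p_determined g1 g2 EL) => x xL.
  have := congr1 (fun f : {ffun T -> T} => f x) Eq; rewrite !ffunE -EL xL //.
move: h1 h2; rewrite !inE; move=> /andP[ho1 _] /andP[ho2 _].
rewrite (F_eq ho1) (F_eq ho2); apply: eq_imset => x; by rewrite Hp.
Qed.

Lemma enc_sub : enc @: Fixs \subset Sset.
Proof.
apply/fintype.subsetP=> _ /imsetP[F hF ->].
have gp := goodF hF.
move: hF; rewrite inE => /andP[oF _].
apply/bigcupP; exists (Lset g (partner F)).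
  by rewrite inE powersetE Lset_sub Lset_half.
apply/imsetP; eexists; last reflexivity.
rewrite inE; apply/familyP => x; rewrite ffunE.
by case: ifP => _; rewrite inE ?partner_e.
Qed.

Lemma card_S : (#|Sset| <= 2 ^ #|Rs| * (maxn k 1) ^ (#|Rs|./2))%N.
Proof.
apply: (leq_trans (card_bigcup_le _ _)).
apply: (@leq_trans (\sum_(L in [set L in powerset Rs | (#|L| + #|L| <= #|Rs|)%N])
            (maxn k 1) ^ (#|Rs|./2))).
  apply: leq_sum => L; rewrite inE => /andP[_ hL].
  apply: (leq_trans (leq_imset_card _ _)).
  rewrite (card_Fam L reg).
  apply: (@leq_trans ((maxn k 1) ^ #|L|)).
    by elim: #|L| => // j IH; rewrite !expnS leq_mul // leq_maxl.
  apply: leq_pexp2l; first by rewrite leq_max orbT.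
  have := odd_double_half #|Rs|; case: (odd #|Rs|) => /=; lia.
rewrite sum_nat_const leq_mul2r -card_powerset; apply/orP; right.
by apply: subset_leq_card; apply/fintype.subsetP=> L; rewrite inE => /andP[].
Qed.

Lemma count_bound : (num_fixed_one_factors e g <= 2 ^ #|Rs| * (maxn k 1) ^ (#|Rs|./2))%N.
Proof.
rewrite /num_fixed_one_factors -/Fixs -(card_in_imset enc_inj).
exact: leq_trans (subset_leq_card enc_sub) card_S.
Qed.

End Count.

Local Open Scope ring_scope.

Lemma real_part (R : realType) (N n k : nat) : (N ^ 4 <= (4 * k) ^ n)%N ->
  (N%:R : R) <= powR (8 * expR 1 * k%:R) (n%:R / 4).
Proof.
move=> H.
have e1 : (1 : R) <= expR 1 by rewrite -expR0 ler_expR.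
have a0 : (0 : R) <= 8 * expR 1 * k%:R by rewrite !mulr_ge0 // expR_ge0.
rewrite -(@ler_pXn2r _ 4) // ?nnegrE ?powR_ge0 //.
rewrite -(powR_mulrn 4 (powR_ge0 _ _)) -powRrM mulfVK ?pnatr_eq0 //.
rewrite powR_mulrn // -natrX.
apply: (@le_trans _ _ (((4 * k)^n)%N%:R)); first by rewrite ler_nat.
rewrite natrX natrM lerXn2r ?nnegrE ?mulr_ge0 //.
rewrite ler_wpM2r //.
have -> : (4 : R) = 4 * 1 by rewrite mulr1.
have -> : (8 : R) = 4 * 2 by rewrite -natrM.
rewrite -mulrA ler_wpM2l //.
by rewrite (le_trans e1) // ler_peMl ?expR_ge0 // ler1n.
Qed.

Theorem mainTheorem2 (R : realType) (T : finType) (e : rel T) (k : nat)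
  (g : {perm T}) :
  simple_graph e -> regular e k -> is_automorphism e g ->
  (forall x : T, g x != x) ->
  ((num_fixed_one_factors e g)%:R : R) <=
    powR (8 * expR 1 * k%:R) (#|T|%:R / 4).
Proof.
move=> sg reg _ nf.
have [N0|NP] := posnP (num_fixed_one_factors e g).
  by rewrite N0 powR_ge0.
apply: real_part.
apply: (natpart (count_bound g sg reg)).
  exact: reps_half.
case: (posnP #|T|) => [->|nT]; first by left.
right.
move: NP; rewrite /num_fixed_one_factors card_gt0 => /set0Pn [F]; rewrite inE => /andP[oF _].
move: nT => /card_gt0P [v _].
rewrite -(reg v) card_gt0; apply/set0Pn; exists (partner F v).
by rewrite inE partner_e.
Qed.
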